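(* Let $P=MN\supset T$ be a maximal parabolic subgroup of $G=\mathrm{GL}_d$, $U\subset N(F)$ and $H\subset M(F)$ open and closed subgroups with $H$ normalizing $U$, and let $\mathfrak{u}$ be the Lie algebra of $U$. Let $X$ be an $H$-orbit in $\mathscr{X}^M$. Then $\dim_k\big(\mathfrak{u}/(\mathfrak{u}\cap\mathrm{Ad}(g)\mathfrak{g}(\mathcal{O}))\big)$ is independent of $g$ for $gK\in X$.
   Context: $k$ algebraically closed, $F=k((\epsilon))$, $\mathcal{O}=k[[\epsilon]]$, $G=\mathrm{GL}_d$, $T$ diagonal torus, $K=G(\mathcal{O})$, $\mathscr{X}=G(F)/K$. $P=MN$ is a Levi decomposition with $M\supset T$; $\mathscr{X}^M=M(F)/M(\mathcal{O})$ is embedded in $\mathscr{X}$ via $mM(\mathcal{O})\mapsto mK$. *)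

(* Defs.v *)
From HB Require Import structures.
From mathcomp Require Import all_boot all_order all_algebra.
From mathcomp Require Import boolp.
From mathcomp Require Import zify.

Set Implicit Arguments.
Unset Strict Implicit.
Unset Printing Implicit Defensive.

Import Order.TTheory GRing.Theory.
Local Open Scope ring_scope.

Section PowerSeries.
Variable R : idomainType.

Record pser := Pser { pcoef : nat -> R }.

HB.instance Definition _ := gen_eqMixin pser.
HB.instance Definition _ := gen_choiceMixin pser.

Lemma pserP (a b : pser) : (forall n, pcoef a n = pcoef b n) -> a = b.
Proof.
case: a => f; case: b => g /= H; congr Pser; apply/funext => n; exact: H.
Qed.

Definition ps_zero := Pser (fun _ => 0).
Definition ps_add a b := Pser (fun n => pcoef a n + pcoef b n).
Definition ps_opp a := Pser (fun n => - pcoef a n).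

Fact ps_addA : associative ps_add.
Proof. by move=> a b c; apply: pserP => n /=; rewrite addrA. Qed.
Fact ps_addC : commutative ps_add.
Proof. by move=> a b; apply: pserP => n /=; rewrite addrC. Qed.
Fact ps_add0 : left_id ps_zero ps_add.
Proof. by move=> a; apply: pserP => n /=; rewrite add0r. Qed.
Fact ps_addN : left_inverse ps_zero ps_opp ps_add.
Proof. by move=> a; apply: pserP => n /=; rewrite addNr. Qed.

HB.instance Definition _ := GRing.isZmodule.Build pser ps_addA ps_addC ps_add0 ps_addN.

Definition ps_trunc (a : pser) n : {poly R} := \poly_(i < n.+1) pcoef a i.

Lemma ps_truncE a n i : (i <= n)%N -> (ps_trunc a n)`_i = pcoef a i.
Proof. by move=> hi; rewrite coef_poly ltnS hi. Qed.

Definition ps_one := Pser (fun n => (n == 0)%:R).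
Definition ps_mul a b := Pser (fun n => (ps_trunc a n * ps_trunc b n)`_n).

Lemma ps_mul_agree (p q : {poly R}) a b n :
  (forall i, (i <= n)%N -> p`_i = pcoef a i) ->
  (forall i, (i <= n)%N -> q`_i = pcoef b i) ->
  (p * q)`_n = pcoef (ps_mul a b) n.
Proof.
move=> hp hq; rewrite /= !coefM; apply: eq_bigr => [[i hi]] _ /=.
rewrite ltnS in hi.
by rewrite hp // hq ?leq_subr // !ps_truncE ?leq_subr.
Qed.

Fact ps_mulA : associative ps_mul.
Proof.
move=> a b c; apply: pserP => n.
rewrite -(@ps_mul_agree (ps_trunc a n) (ps_trunc b n * ps_trunc c n)); last 2 first.
- by move=> i hi; rewrite ps_truncE.
- move=> i hi; apply: ps_mul_agree => j hj; rewrite ps_truncE //; exact: leq_trans hi.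
rewrite -(@ps_mul_agree (ps_trunc a n * ps_trunc b n) (ps_trunc c n)); last 2 first.
- move=> i hi; apply: ps_mul_agree => j hj; rewrite ps_truncE //; exact: leq_trans hi.
- by move=> i hi; rewrite ps_truncE.
by rewrite mulrA.
Qed.

Fact ps_mulC : commutative ps_mul.
Proof. by move=> a b; apply: pserP => n /=; rewrite mulrC. Qed.

Fact ps_mul1 : left_id ps_one ps_mul.
Proof.
move=> a; apply: pserP => n.
rewrite -(@ps_mul_agree 1 (ps_trunc a n)).
- by rewrite mul1r ps_truncE.
- by move=> i _; rewrite coef1.
- by move=> i hi; rewrite ps_truncE.
Qed.

Fact ps_mulDl : left_distributive ps_mul ps_add.
Proof.
move=> a b c; apply: pserP => n.
rewrite -(@ps_mul_agree (ps_trunc a n + ps_trunc b n) (ps_trunc c n)).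
- by rewrite mulrDl coefD.
- by move=> i hi; rewrite coefD !ps_truncE.
- by move=> i hi; rewrite ps_truncE.
Qed.

Fact ps_one_neq0 : ps_one != ps_zero.
Proof.
apply/negP => /eqP h; have := congr1 (fun x => pcoef x 0) h => /=.
by move/eqP; rewrite oner_eq0.
Qed.

HB.instance Definition _ :=
  GRing.Zmodule_isComNzRing.Build pser ps_mulA ps_mulC ps_mul1 ps_mulDl ps_one_neq0.

Definition ps_unit : {pred pser} := fun x => `[< exists y : pser, y * x = 1 >].
Definition ps_inv (x : pser) : pser :=
  match pselect (exists y : pser, y * x = 1) with
  | left h => projT1 (cid h)
  | right _ => x
  end.

Fact ps_mulVx : {in ps_unit, left_inverse 1 ps_inv *%R}.
Proof.
move=> x hx; rewrite /ps_inv.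
by case: pselect => [h|h]; [case: (cid h) | exfalso; apply: h; apply/asboolP].
Qed.

Fact ps_unitPl (x y : pser) : y * x = 1 -> ps_unit x.
Proof. by move=> h; apply/asboolP; exists y. Qed.

Fact ps_inv_out : {in [predC ps_unit], ps_inv =1 id}.
Proof.
move=> x hx; rewrite /ps_inv; case: pselect => // h.
by exfalso; move: hx; rewrite inE /= => /negP; apply; apply/asboolP.
Qed.

HB.instance Definition _ :=
  GRing.ComNzRing_hasMulInverse.Build pser ps_mulVx ps_unitPl ps_inv_out.

Lemma ps_mulE (a b : pser) n :
  pcoef (a * b) n = \sum_(i < n.+1) pcoef a i * pcoef b (n - i).
Proof.
rewrite /= coefM; apply: eq_bigr => [[i hi]] _ /=.
by rewrite ltnS in hi; rewrite !ps_truncE ?leq_subr.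
Qed.

Fact ps_integral : GRing.integral_domain_axiom pser.
Proof.
move=> x y hxy.
case: (eqVneq x 0) => [hx0|hx]; first by apply/orP; left; apply/eqP.
case: (eqVneq y 0) => [hy0|hy]; first by apply/orP; right; apply/eqP.
exfalso.
have ex : exists i, pcoef x i != 0.
  case: (pselect (exists i, pcoef x i != 0)) => // h; exfalso.
  move/eqP: hx; apply; apply: pserP => n /=; apply/eqP.
  by apply/negPn/negP => hn; apply: h; exists n.
have ey : exists j, pcoef y j != 0.
  case: (pselect (exists i, pcoef y i != 0)) => // h; exfalso.
  move/eqP: hy; apply; apply: pserP => n /=; apply/eqP.
  by apply/negPn/negP => hn; apply: h; exists n.
pose i := ex_minn ex; pose j := ex_minn ey.
have [xi mi] : pcoef x i != 0 /\ forall l, pcoef x l != 0 -> (i <= l)%N.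
  by rewrite /i; case: ex_minnP.
have [yj mj] : pcoef y j != 0 /\ forall l, pcoef y l != 0 -> (j <= l)%N.
  by rewrite /j; case: ex_minnP.
have := congr1 (fun z => pcoef z (i + j)) hxy; rewrite ps_mulE /=.
have hi : (i < (i + j).+1)%N by rewrite ltnS leq_addr.
rewrite (bigD1 (Ordinal hi)) //= big1 ?addr0.
  by rewrite addKn => /eqP; rewrite mulf_eq0 (negbTE xi) (negbTE yj).
move=> [l hl] /= hneq.
have {}hneq : l != i by apply: contra hneq => /eqP e; apply/eqP/val_inj.
case: (ltngtP l i) hneq => // hli _.
- have : pcoef x l == 0 by apply: contraLR hli; rewrite -leqNgt => /mi.
  by move/eqP ->; rewrite mul0r.
- have : pcoef y (i + j - l) == 0.
    apply: contraLR hli; rewrite -leqNgt => /mj h2.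
    by move: h2 hl; rewrite ltnS; lia.
  by move/eqP ->; rewrite mulr0.
Qed.

HB.instance Definition _ := GRing.ComUnitRing_isIntegral.Build pser ps_integral.

Definition ps_eps : pser := Pser (fun n => (n == 1)%:R).
Definition ps_const (c : R) : pser := Pser (fun n => if n == 0 then c else 0).

End PowerSeries.

(* The field of formal Laurent series k((eps)), realised as the fraction
   field of the power series ring O = k[[eps]]. *)
Notation Laurent k := {fraction pser k}.

Section GLd.
Variables (k : idomainType) (d : nat).
Local Notation F := (Laurent k).
Local Notation mat := 'M[F]_d.

Definition Fconst (c : k) : F := tofrac (ps_const c).
Definition kscale (c : k) (X : mat) : mat := Fconst c *: X.

Definition in_epsO (m : nat) (x : F) : Prop :=
  exists a : pser k, x = tofrac (ps_eps k ^+ m * a).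
(* the matrix Y lies in eps^m gl_d(O); for m = 0 this is g(O) = gl_d(O) *)
Definition mat_epsO (m : nat) (Y : mat) : Prop := forall i j, in_epsO m (Y i j).

Definition inGL (g : mat) : Prop := g \in unitmx.
Definition inK (g : mat) : Prop := inGL g /\ mat_epsO 0 g /\ mat_epsO 0 (invmx g).

(* The maximal parabolic P = MN containing the diagonal torus T is the
   stabiliser of the coordinate subspace V_I = span(e_i, i in I), for a
   nonempty proper subset I of {0..d-1}; its Levi M containing T is the
   stabiliser of V_I and V_{I^c} (block diagonal), N its unipotent radical. *)
Definition inM (I : {set 'I_d}) (g : mat) : Prop :=
  inGL g /\ forall i j, (i \in I) != (j \in I) -> g i j = 0.
Definition in_nlie (I : {set 'I_d}) (X : mat) : Prop :=
  forall i j, ~~ ((i \in I) && (j \notin I)) -> X i j = 0.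
Definition inN (I : {set 'I_d}) (g : mat) : Prop := in_nlie I (g - 1%:M).

(* eps-adic topology (subspace topology from F^(d*d)), relative to an
   ambient set A: S is open in A if each point g of S has a neighbourhood
   (g + eps^m gl_d(O)) /\ A contained in S; closed in A if A \ S is open in A. *)
Definition open_in (A S : mat -> Prop) : Prop :=
  forall g, S g -> exists m : nat, forall Y, mat_epsO m Y -> A (g + Y) -> S (g + Y).
Definition closed_in (A S : mat -> Prop) : Prop :=
  open_in A (fun g => A g /\ ~ S g).

Definition is_subgroup (S : mat -> Prop) : Prop :=
  [/\ S 1%:M, (forall g h, S g -> S h -> S (g *m h)) & (forall g, S g -> S (invmx g))].

(* Lie algebra of a subgroup U of the vector group N(F) = 1 + n(F):
   the k-subspace of those X in n(F) with 1 + cX in U for all c in k. *)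
Definition lie_of_unip (I : {set 'I_d}) (U : mat -> Prop) (X : mat) : Prop :=
  in_nlie I X /\ forall c : k, U (1%:M + kscale c X).

Definition Ad_gO (g X : mat) : Prop :=
  exists Y, mat_epsO 0 Y /\ X = g *m Y *m invmx g.

(* dim_k (V / W) >= n  (V, W k-subspaces of gl_d(F), W inside V) *)
Definition quot_dim_ge (V W : mat -> Prop) (n : nat) : Prop :=
  exists x : 'I_n -> mat, (forall i, V (x i)) /\
    forall c : 'I_n -> k, W (\sum_(i < n) kscale (c i) (x i)) -> forall i, c i = 0.

(* dim_k (V / W1) = dim_k (V / W2)  as elements of N u {oo} *)
Definition quot_dim_eq (V W1 W2 : mat -> Prop) : Prop :=
  forall n, quot_dim_ge V W1 n <-> quot_dim_ge V W2 n.

(* gK lies in the image in G(F)/K of the H-orbit of m0 M(O) in M(F)/M(O),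
   i.e. gK = h m0 K for some h in H. *)
Definition in_Horbit (H : mat -> Prop) (m0 g : mat) : Prop :=
  exists h, H h /\ inK (invmx g *m (h *m m0)).

End GLd.

(* Main.v *)
Require Import Defs.
From HB Require Import structures.
From mathcomp Require Import all_boot all_order all_algebra.
From mathcomp Require Import boolp.
Set Implicit Arguments.
Unset Strict Implicit.
Unset Printing Implicit Defensive.
Import GRing.Theory.
Local Open Scope ring_scope.

Section Gen.
Variables (R : comUnitRingType) (n : nat).
Implicit Types A B g gg h X Y : 'M[R]_n.
Lemma invmxM' A B : A \in unitmx -> B \in unitmx ->
  invmx (A *m B) = invmx B *m invmx A.
Proof.
move=> uA uB; have uAB : A *m B \in unitmx by rewrite unitmx_mul uA uB.
have e : (A *m B) *m (invmx B *m invmx A) = 1%:M.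
  by rewrite -mulmxA (mulmxA B) mulmxV // mul1mx mulmxV.
by rewrite -[LHS]mulmx1 -e mulmxA mulVmx // mul1mx.
Qed.

Lemma conj_Ad_gen g gg h Y : g \in unitmx -> gg \in unitmx -> h \in unitmx ->
  let kk := invmx gg *m (h *m g) in
  h *m (g *m Y *m invmx g) *m invmx h = gg *m (kk *m Y *m invmx kk) *m invmx gg.
Proof.
move=> ug ugg uh kk.
have hg : h *m g = gg *m kk by rewrite /kk mulmxA mulmxV // mul1mx.
rewrite /kk !invmxM' ?unitmx_mul ?unitmx_inv ?uh ?ug ?ugg // invmxK.
rewrite !mulmxA mulmxV // mul1mx.
by rewrite mulmxK.
Qed.

Lemma kappa_gen g1 g2 h1 h2 m0 : g1 \in unitmx -> g2 \in unitmx ->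
  h1 \in unitmx -> h2 \in unitmx -> m0 \in unitmx ->
  invmx g2 *m ((h2 *m invmx h1) *m g1) =
  (invmx g2 *m (h2 *m m0)) *m invmx (invmx g1 *m (h1 *m m0)).
Proof.
move=> u1 u2 v1 v2 um.
rewrite !invmxM' ?unitmx_mul ?unitmx_inv ?v1 ?um ?u1 // invmxK.
by rewrite !mulmxA mulmxK // -!mulmxA.
Qed.

Lemma kappa_inv g1 g2 h : g1 \in unitmx -> g2 \in unitmx -> h \in unitmx ->
  invmx (invmx g2 *m (h *m g1)) = invmx g1 *m (invmx h *m g2).
Proof.
move=> u1 u2 uh.
by rewrite !invmxM' ?unitmx_mul ?unitmx_inv ?uh ?u1 ?u2 // invmxK mulmxA.
Qed.

Lemma conjK h X : h \in unitmx ->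
  invmx h *m (h *m X *m invmx h) *m invmx (invmx h) = X.
Proof. by move=> uh; rewrite invmxK !mulmxA mulVmx // mul1mx mulmxKV. Qed.

Lemma conj_1Z h (c : R) X : h \in unitmx ->
  h *m (1%:M + c *: X) *m invmx h = 1%:M + c *: (h *m X *m invmx h).
Proof.
move=> uh; by rewrite mulmxDr mulmxDl mulmx1 mulmxV // -scalemxAr -scalemxAl.
Qed.

Lemma conj_sum h m (c : 'I_m -> R) (x : 'I_m -> 'M[R]_n) :
  h *m (\sum_(i < m) c i *: x i) *m invmx h = \sum_(i < m) c i *: (h *m x i *m invmx h).
Proof.
rewrite mulmx_sumr mulmx_suml; apply: eq_bigr => i _.
by rewrite -scalemxAr -scalemxAl.
Qed.
End Gen.

Section Helpers.
Variables (k : idomainType) (d : nat).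
Local Notation F := (Laurent k).
Local Notation mat := 'M[F]_d.

Lemma in_epsO0E (x : F) : in_epsO 0 x <-> exists a : pser k, x = tofrac a.
Proof.
split=> [[a ->]|[a ->]]; exists a => //; by rewrite expr0 mul1r.
Qed.

Lemma in_epsO0_mul_mx (A B : mat) :
  mat_epsO 0 A -> mat_epsO 0 B -> mat_epsO 0 (A *m B).
Proof.
move=> hA hB i j; rewrite mxE.
apply: (big_ind (fun x => in_epsO 0 x)).
- by apply/in_epsO0E; exists 0; rewrite tofrac0.
- move=> x y /in_epsO0E [a ->] /in_epsO0E [b ->].
  by apply/in_epsO0E; exists (a + b); rewrite tofracD.
- move=> l _; have /in_epsO0E [a ->] := hA i l; have /in_epsO0E [b ->] := hB l j.
  by apply/in_epsO0E; exists (a * b); rewrite tofracM.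
Qed.

Lemma inK_mul (a b : mat) : inK a -> inK b -> inK (a *m b).
Proof.
move=> [ua [ia ia']] [ub [ib ib']]; split; first by rewrite /inGL unitmx_mul ua ub.
split; first exact: in_epsO0_mul_mx.
rewrite (invmxM' ua ub); exact: in_epsO0_mul_mx.
Qed.

Lemma inK_inv (a : mat) : inK a -> inK (invmx a).
Proof.
move=> [ua [ia ia']]; split; first by rewrite /inGL unitmx_inv.
by rewrite invmxK.
Qed.

Lemma in_nlie_conj (I : {set 'I_d}) (h h' X : mat) :
  (forall i j, (i \in I) != (j \in I) -> h i j = 0) ->
  (forall i j, (i \in I) != (j \in I) -> h' i j = 0) ->
  in_nlie I X -> in_nlie I (h *m X *m h').
Proof.
move=> hh hh' hX i j hij; rewrite mxE big1 // => b _; rewrite mxE big_distrl /=.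
rewrite big1 // => a _.
case: (boolP ((i \in I) != (a \in I))) => [/hh ->|]; first by rewrite !mul0r.
rewrite negbK => /eqP ia.
case: (boolP ((b \in I) != (j \in I))) => [/hh' ->|]; first by rewrite mulr0.
rewrite negbK => /eqP bj.
rewrite hX ?mulr0 ?mul0r //.
by rewrite -ia bj.
Qed.

End Helpers.

Section Main.
Variables (k : idomainType) (d : nat) (I : {set 'I_d})
  (U H : 'M[Laurent k]_d -> Prop).
Local Notation mat := 'M[Laurent k]_d.
Hypothesis HM : forall h, H h -> inM I h.
Hypothesis Hsub : is_subgroup H.
Hypothesis HU : forall h u, H h -> U u -> U (h *m u *m invmx h).

Lemma unitH h : H h -> h \in unitmx.
Proof. by move=> /HM []. Qed.

Lemma conj_lie h X : H h -> lie_of_unip I U X ->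
  lie_of_unip I U (h *m X *m invmx h).
Proof.
move=> Hh [hX hU]; have [_ _ Hinv] := Hsub.
split.
  apply: in_nlie_conj hX; [exact: (HM Hh).2 | exact: (HM (Hinv _ Hh)).2].
move=> c; rewrite /kscale -conj_1Z.
  2: exact: unitH.
by apply: HU => //; apply: hU.
Qed.

Lemma dir (g g' h : mat) n : H h -> inGL g -> inGL g' ->
  inK (invmx g' *m (h *m g)) ->
  quot_dim_ge (lie_of_unip I U) (fun X => lie_of_unip I U X /\ Ad_gO g X) n ->
  quot_dim_ge (lie_of_unip I U) (fun X => lie_of_unip I U X /\ Ad_gO g' X) n.
Proof.
move=> Hh ug ug' hK [x [hx hind]].
have [_ _ Hinv] := Hsub.
have uh := unitH Hh.
exists (fun i => h *m x i *m invmx h); split.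
  by move=> i; apply: conj_lie.
move=> c [hl hA]; apply: hind.
have e : \sum_(i < n) kscale (c i) (x i) =
   invmx h *m (\sum_(i < n) kscale (c i) (h *m x i *m invmx h)) *m invmx (invmx h).
  rewrite /kscale conj_sum; apply: eq_bigr => i _; by rewrite conjK.
rewrite e; split; first by apply: conj_lie hl; apply: Hinv.
move: hA => [Y [hY eY]].
have uh' : invmx h \in unitmx by rewrite unitmx_inv.
rewrite eY (conj_Ad_gen Y ug' ug uh').
exists ((invmx g *m (invmx h *m g')) *m Y *m invmx (invmx g *m (invmx h *m g'))).
split; last exact: erefl.
have K' := inK_inv hK; rewrite (kappa_inv ug ug' uh) in K'.
case: K' => _ [K1 K2].
exact: (in_epsO0_mul_mx (in_epsO0_mul_mx K1 hY) K2).
Qed.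
End Main.

Theorem mainTheorem16 (k : closedFieldType) (d : nat) (I : {set 'I_d})
    (U H : 'M[Laurent k]_d -> Prop) :
  I != set0 -> I != setT ->
  (forall u, U u -> inN I u) -> is_subgroup U ->
  open_in (inN I) U -> closed_in (inN I) U ->
  (forall h, H h -> inM I h) -> is_subgroup H ->
  open_in (inM I) H -> closed_in (inM I) H ->
  (forall h u, H h -> U u -> U (h *m u *m invmx h)) ->
  forall m0 : 'M[Laurent k]_d, inM I m0 ->
  forall g1 g2 : 'M[Laurent k]_d, inGL g1 -> inGL g2 ->
  in_Horbit H m0 g1 -> in_Horbit H m0 g2 ->
  quot_dim_eq (lie_of_unip I U)
    (fun X => lie_of_unip I U X /\ Ad_gO g1 X)
    (fun X => lie_of_unip I U X /\ Ad_gO g2 X).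
Proof.
move=> _ _ _ _ _ _ HM Hsub _ _ HU m0 [um _] g1 g2 u1 u2 [h1 [H1 K1]] [h2 [H2 K2]] n.
have [_ Hmul Hinv] := Hsub.
have Hh : H (h2 *m invmx h1) by apply: Hmul => //; apply: Hinv.
have v1 := unitH HM H1; have v2 := unitH HM H2; have uh := unitH HM Hh.
have Kh : inK (invmx g2 *m ((h2 *m invmx h1) *m g1)).
  rewrite (kappa_gen u1 u2 v1 v2 um); exact: (inK_mul K2 (inK_inv K1)).
have Kh' := inK_inv Kh; rewrite (kappa_inv u1 u2 uh) in Kh'.
split.
  exact: (dir HM Hsub HU Hh u1 u2 Kh).
exact: (dir HM Hsub HU (Hinv _ Hh) u2 u1 Kh').
Qed.
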